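(* Let $r\in\mathbb{N}$ and $\eta(r)=11(r+1)^2(2r+3)\binom{2r}{r-1}$. Let $G$ be an $rP_3$-free graph and let $A,B$ be two disjoint stable sets in $G$ such that every vertex in $B$ has at least two neighbours in $A$. Then there exists $S\subseteq A$ with $|S|\leq\eta(r)$ such that every vertex in $B$ has a neighbour in $S$.
   Context: Graphs are finite and simple. $rP_3$ is the disjoint union of $r$ paths on $3$ vertices; a graph is $H$-free if it has no induced subgraph isomorphic to $H$. A stable set is a set of pairwise nonadjacent vertices. *)

(* Defs.v *)
From mathcomp Require Import all_boot.
Set Implicit Arguments. Unset Strict Implicit. Unset Printing Implicit Defensive.

Definition simple_graph (T : finType) (e : rel T) : Prop :=
  symmetric e /\ irreflexive e.

(* Adjacency of the graph rP_3 on vertex set 'I_r * 'I_3: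
   (c, i) ~ (d, j) iff c = d and |i - j| = 1 (path 0 - 1 - 2 in each copy). *)
Definition rP3_adj (r : nat) (x y : 'I_r * 'I_3) : bool :=
  (x.1 == y.1) && ((x.2.+1 == y.2 :> nat) || (y.2.+1 == x.2 :> nat)).

Definition has_induced_rP3 (T : finType) (e : rel T) (r : nat) : Prop :=
  exists f : 'I_r * 'I_3 -> T,
    injective f /\ forall x y, e (f x) (f y) = rP3_adj x y.

Definition rP3_free (T : finType) (e : rel T) (r : nat) : Prop :=
  ~ has_induced_rP3 e r.

Definition stable (T : finType) (e : rel T) (A : {set T}) : Prop :=
  forall x y, x \in A -> y \in A -> ~~ e x y.

Definition eta (r : nat) : nat :=
  11 * (r.+1) ^ 2 * (2 * r + 3) * 'C(2 * r, r.-1).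

(* Main.v *)
Require Import Defs.
From mathcomp Require Import all_boot zify.
Set Implicit Arguments.

Definition strc (T : finType) (N : T -> {set T}) (B : {set T}) (k : nat) :=
  exists bs p q : nat -> T, forall i, i < k ->
    [/\ bs i \in B, p i \in N (bs i), q i \in N (bs i), p i != q i &
        forall j, j < k -> j != i -> (p j \notin N (bs i)) && (q j \notin N (bs i))].

Lemma cardU1_le (T : finType) (x : T) (A : {set T}) : #|x |: A| <= #|A|.+1.
Proof. by rewrite cardsU1; case: (x \notin A). Qed.

Lemma key (T : finType) (k : nat) : forall (A B : {set T}) (N : T -> {set T}),
  (forall b, b \in B -> N b \subset A) ->
  (forall b, b \in B -> 1 < #|N b|) ->
  ~ strc N B k ->
  exists S : {set T}, [/\ S \subset A, #|S| <= 2 * k &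
     forall b, b \in B -> exists2 s, s \in S & s \in N b].
Proof.
elim: k => [|k IH] A B N HA H2 Hns.
  case: (set_0Vmem B) => [->|[b1 Hb1]].
    by exists set0; split => //; [exact: sub0set | rewrite cards0 | move=> b; rewrite inE].
  by exfalso; apply: Hns; exists (fun _ => b1), (fun _ => b1), (fun _ => b1).
case: (set_0Vmem B) => [->|[b1 Hb1]].
  by exists set0; split => //; [exact: sub0set | rewrite cards0 | move=> b; rewrite inE].
case: (arg_minnP (fun b => #|N b|) Hb1) => b0 Hb0 Hmin.
have /card_gt1P [x [y [Hx Hy Hxy]]] := H2 _ Hb0.
pose B1 := [set b in B | (x \notin N b) && (y \notin N b)].
pose N' := fun b => N b :\: N b0.
have [S1 [HS1A HS1c HS1]] : exists S : {set T}, [/\ S \subset A, #|S| <= 2 * k &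
     forall b, b \in B1 -> exists2 s, s \in S & s \in N' b].
  apply: IH.
  - move=> b; rewrite inE => /andP [Hb _].
    apply: subset_trans (HA _ Hb); exact: subsetDl.
  - move=> b; rewrite inE => /andP [Hb /andP [Hxb Hyb]].
    rewrite ltnNge; apply/negP => Hle.
    have Hm := Hmin _ Hb.
    have := cardsID (N b0) (N b).
    have Hsub : x |: (y |: (N b :&: N b0)) \subset N b0.
      apply/subsetP => z; rewrite !inE => /or3P [/eqP->|/eqP->|/andP [_ ->]] //.
    have := subset_leq_card Hsub.
    rewrite cardsU1 !inE (negbTE Hxb) /= cardsU1 !inE (negbTE Hyb) /= (negbTE Hxy) /=.
    rewrite /N' in Hle. lia.
  - move=> [bs [p [q Hs]]]; apply: Hns; rewrite /N' /B1 in Hs.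
    exists (fun i => if i is i'.+1 then bs i' else b0),
           (fun i => if i is i'.+1 then p i' else x),
           (fun i => if i is i'.+1 then q i' else y).
    case=> [|i] Hi.
      split => // j Hj; case: j Hj => [|j] Hj //= _.
      have := Hs j Hj; rewrite !inE => -[_ /andP [H4 _] /andP [H5 _] _ _].
      by rewrite H4 H5.
    have := Hs i Hi; rewrite !inE => -[/and3P [Hbi H1 H3] /andP [Hpi Hpi'] /andP [Hqi Hqi'] Hpq Hj].
    split => //.
    case=> [|j] Hjk Hji /=; first by rewrite H1 H3.
      have := Hj j Hjk Hji; rewrite !inE.
      have := Hs j Hjk; rewrite !inE => -[_ /andP [-> _] /andP [-> _] _ _] /=.
      by case/andP => /negbTE -> /negbTE ->.
exists (x |: (y |: S1)); split.
- apply/subsetP => z; rewrite !inE => /or3P [/eqP->|/eqP->|Hz].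
  + exact: (subsetP (HA _ Hb0)).
  + exact: (subsetP (HA _ Hb0)).
  + exact: (subsetP HS1A).
- apply: leq_trans (cardU1_le _ _) _; have := cardU1_le y S1; lia.
- move=> b Hb.
  case Hxb: (x \in N b); first by exists x; rewrite ?inE ?eqxx.
  case Hyb: (y \in N b); first by exists y; rewrite ?inE ?eqxx ?orbT.
  have [s Hs Hs'] : exists2 s, s \in S1 & s \in N' b by apply: HS1; rewrite inE Hb Hxb Hyb.
  by exists s; rewrite ?inE ?Hs ?orbT //; move: Hs'; rewrite inE => /andP [].
Qed.

Set Bullet Behavior "Strict Subproofs".
Theorem lemma2p5 (r : nat) (T : finType) (e : rel T) (A B : {set T}) :
  simple_graph e ->
  rP3_free e r ->
  stable e A -> stable e B -> [disjoint A & B] ->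
  (forall b, b \in B -> 2 <= #|[set a in A | e b a]|) ->
  exists S : {set T},
    [/\ S \subset A, #|S| <= eta r &
        forall b, b \in B -> exists2 s, s \in S & e b s].
Proof.
move=> [Hsym Hirr] Hfree HA HB Hdis H2.
have Hsub : forall b, b \in B -> [set a in A | e b a] \subset A.
  by move=> b _; apply/subsetP => z; rewrite inE => /andP [].
have Hnot : ~ strc (fun b => [set a in A | e b a]) B r.
{   move=> [bs [p [q Hs]]]; apply: Hfree.
  have Hst : forall i, i < r -> [/\ bs i \in B, p i \in A, q i \in A &
     [/\ e (bs i) (p i), e (bs i) (q i) & p i != q i]].
    by move=> i Hi; have := Hs i Hi; rewrite !inE => -[-> /andP [-> ->] /andP [-> ->] -> _].
  have Hne : forall i j, i < r -> j < r -> j != i ->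
      ~~ e (bs i) (p j) /\ ~~ e (bs i) (q j).
    move=> i j Hi Hj Hji; have [_ _ _ _ H] := Hs i Hi.
    have := H j Hj Hji; have [_ Hp Hq _] := Hst j Hj.
    by rewrite !inE Hp Hq => /andP.
  have Hdisj : forall a, a \in A -> a \in B -> False.
    move=> a Ha Hb; have := disjoint_setI0 Hdis; move/setP/(_ a).
    by rewrite !inE Ha Hb.
  have Hneo : forall c d : 'I_r, c != d -> (d : nat) != c.
    by move=> c d; apply: contra => /eqP E; apply/eqP/val_inj.
  exists (fun x : 'I_r * 'I_3 => match val x.2 with 0 => p x.1 | 1 => bs x.1 | _ => q x.1 end).
  split.
  - move=> [c [i Hi]] [d [j Hj]] /= Heq.
    case: (eqVneq c d) => [Ecd|Ncd].
    + subst d; suff E : i = j by subst j; congr (_, _); apply: val_inj.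
      have [Hb Hp Hq [He1 He2 Hpq]] := Hst c (ltn_ord c).
      move: i j Hi Hj Heq => [|[|[|i]]] [|[|[|j]]] //= Hi Hj Heq.
      all: exfalso; first [ by rewrite Heq eqxx in Hpq
        | by apply: (Hdisj (p c)) => //; rewrite Heq
        | by apply: (Hdisj (p c)) => //; rewrite -Heq
        | by apply: (Hdisj (q c)) => //; rewrite Heq
        | by apply: (Hdisj (q c)) => //; rewrite -Heq ].
    + exfalso.
      have [Hb Hp Hq [He1 He2 Hpq]] := Hst c (ltn_ord c).
      have [Hb' Hp' Hq' [He1' He2' Hpq']] := Hst d (ltn_ord d).
      have Ndc : d != c by rewrite eq_sym.
      have [N1 N2] := Hne c d (ltn_ord c) (ltn_ord d) (Hneo _ _ Ncd).
      have [N3 N4] := Hne d c (ltn_ord d) (ltn_ord c) (Hneo _ _ Ndc).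
      move: i j Hi Hj Heq => [|[|[|i]]] [|[|[|j]]] //= Hi Hj Heq.
      all: first [ by rewrite Heq (negbTE N1) in He1 | by rewrite Heq (negbTE N2) in He1
        | by rewrite Heq (negbTE N1) in He2 | by rewrite Heq (negbTE N2) in He2
        | by rewrite -Heq (negbTE N1) in He1'
        | by apply: (Hdisj (p c)) => //; rewrite Heq | by apply: (Hdisj (q c)) => //; rewrite Heq
        | by apply: (Hdisj (p d)) => //; rewrite -Heq | by apply: (Hdisj (q d)) => //; rewrite -Heq ].
  - move=> [c [i Hi]] [d [j Hj]]; rewrite /rP3_adj /=.
    case: (eqVneq c d) => [<-|Ncd].
    + rewrite ?eqxx /=.
      have [Hb Hp Hq [He1 He2 Hpq]] := Hst c (ltn_ord c).
      move: i j Hi Hj => [|[|[|i]]] [|[|[|j]]] //= _ _.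
      all: first [ by rewrite Hirr | by rewrite Hsym | by apply: He1 | by apply: He2
        | by apply/negbTE; apply: HA | by apply/negbTE; rewrite Hsym; apply: HA ].
    + rewrite /=.
      have [Hb Hp Hq [He1 He2 Hpq]] := Hst c (ltn_ord c).
      have [Hb' Hp' Hq' [He1' He2' Hpq']] := Hst d (ltn_ord d).
      have Ndc : d != c by rewrite eq_sym.
      have [N1 N2] := Hne c d (ltn_ord c) (ltn_ord d) (Hneo _ _ Ncd).
      have [N3 N4] := Hne d c (ltn_ord d) (ltn_ord c) (Hneo _ _ Ndc).
      move: i j Hi Hj => [|[|[|i]]] [|[|[|j]]] //= _ _.
      all: apply/negbTE; first [ by apply: HA | by apply: HB | by [] | by rewrite Hsym ].
}
have [S [HSA HSc HS]] := key Hsub H2 Hnot.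
exists S; split => //.
- apply: leq_trans HSc _; rewrite /eta.
  have : 0 < 'C(2 * r, r.-1) by rewrite bin_gt0; lia.
  nia.
- by move=> b Hb; have [s Hs] := HS b Hb; rewrite inE => /andP [_ H]; exists s.
Qed.
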